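(* For the four-node network described in the context, with arbitrary crossover probabilities, define $\mathbb{C}_{1,4}=1-H(p_{1,4})$, $\mathbb{C}'=1-H(p')$, $\mathbb{C}''=1-H(p'')$ with $$p' = [(1-p_{1,3})(1-p_{2,3})+p_{1,3}p_{2,3}]\,p_{3,4} + [p_{1,3}(1-p_{2,3})+(1-p_{1,3})p_{2,3}](1-p_{3,4}),$$ $$p'' = p_{1,3}(1-p_{2,3})(1-p_{3,4})(1-p_{1,4}) + (1-p_{1,3})p_{2,3}(1-p_{3,4})(1-p_{1,4}) + (1-p_{1,3})(1-p_{2,3})p_{3,4}(1-p_{1,4}) + (1-p_{1,3})(1-p_{2,3})(1-p_{3,4})p_{1,4} + (1-p_{1,3})p_{2,3}p_{3,4}p_{1,4} + p_{1,3}(1-p_{2,3})p_{3,4}p_{1,4} + p_{1,3}p_{2,3}(1-p_{3,4})p_{1,4} + p_{1,3}p_{2,3}p_{3,4}(1-p_{1,4}).$$ Let $\Lambda_{\text{nc}}$ be the convex hull of the rate pairs $(R_A,R_B)$ with $R_A\le\mathbb{C}_{1,4}$, $R_B\le\mathbb{C}''$ (the achievable region of independent network-then-channel decoding); $\Lambda_{\text{serial}}$ the convex hull of those with $R_A\le\mathbb{C}_{1,4}$, $R_B\le\mathbb{C}'$ (the achievable region of serial decoding); and $\Lambda_{\text{joint}}$ the convex hull of those with $R_A\le\mathbb{C}_{1,4}+\mathbb{C}'-\mathbb{C}''$, $R_B\le\mathbb{C}'$, $R_A+R_B\le\mathbb{C}_{1,4}+\mathbb{C}'$ (the achievable region of joint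 decoding). Then $$\Lambda_{\text{nc}} \subseteq \Lambda_{\text{serial}} \subseteq \Lambda_{\text{joint}}.$$
   Context: Network: nodes $1,2,3,4$ with directed links $1\to3$, $1\to4$, $2\to3$, $3\to4$. Each link $i\to j$ is a binary symmetric channel with crossover probability $p_{i,j}\in[0,1]$; the link channels are independent and memoryless. Node 1 sends the same codeword (encoding message $A$) on links $1\to3$ and $1\to4$, node 2 sends a codeword (encoding message $B$) on link $2\to3$, and node 3 forwards the bitwise XOR of its two received vectors on link $3\to4$; node 4 decodes from its two received vectors. $H(p)=-p\log p-(1-p)\log(1-p)$ is the binary entropy function (base 2). Rate regions are subsets of pairs $(R_A,R_B)$ of nonnegative rates. *)

(* Defs.v *)
From Stdlib Require Import Reals List.
Import ListNotations.
Open Scope R_scope.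

(* Binary entropy, base 2.  Stdlib's ln is 0 on nonpositive arguments, so
   p * ln p = 0 at p = 0, giving the usual convention 0 log 0 = 0. *)
Definition Hb (p : R) : R :=
  - (p * ln p + (1 - p) * ln (1 - p)) / ln 2.

Definition p_prime (p13 p23 p34 : R) : R :=
  ((1 - p13) * (1 - p23) + p13 * p23) * p34
  + (p13 * (1 - p23) + (1 - p13) * p23) * (1 - p34).

Definition p_second (p13 p23 p34 p14 : R) : R :=
    p13 * (1 - p23) * (1 - p34) * (1 - p14)
  + (1 - p13) * p23 * (1 - p34) * (1 - p14)
  + (1 - p13) * (1 - p23) * p34 * (1 - p14)
  + (1 - p13) * (1 - p23) * (1 - p34) * p14
  + (1 - p13) * p23 * p34 * p14
  + p13 * (1 - p23) * p34 * p14
  + p13 * p23 * (1 - p34) * p14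
  + p13 * p23 * p34 * (1 - p14).

Definition conv_hull (S : R * R -> Prop) (x : R * R) : Prop :=
  exists l : list (R * (R * R)),
    Forall (fun wp => 0 <= fst wp /\ S (snd wp)) l /\
    fold_right (fun wp acc => fst wp + acc) 0 l = 1 /\
    fst x = fold_right (fun wp acc => fst wp * fst (snd wp) + acc) 0 l /\
    snd x = fold_right (fun wp acc => fst wp * snd (snd wp) + acc) 0 l.

Section Regions.
Variables p13 p14 p23 p34 : R.

Definition C14 : R := 1 - Hb p14.
Definition Cp : R := 1 - Hb (p_prime p13 p23 p34).
Definition Cpp : R := 1 - Hb (p_second p13 p23 p34 p14).

Definition nc_set (r : R * R) : Prop :=
  0 <= fst r /\ 0 <= snd r /\ fst r <= C14 /\ snd r <= Cpp.
Definition serial_set (r : R * R) : Prop :=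
  0 <= fst r /\ 0 <= snd r /\ fst r <= C14 /\ snd r <= Cp.
Definition joint_set (r : R * R) : Prop :=
  0 <= fst r /\ 0 <= snd r /\ fst r <= C14 + Cp - Cpp /\ snd r <= Cp /\
  fst r + snd r <= C14 + Cp.

Definition Lambda_nc := conv_hull nc_set.
Definition Lambda_serial := conv_hull serial_set.
Definition Lambda_joint := conv_hull joint_set.
End Regions.

(* Main.v *)
Require Import Defs.
From Stdlib Require Import Reals Lra Psatz List.
Open Scope R_scope.

Lemma gibbs_term (a c : R) : 0 <= a -> 0 <= c -> (0 < a -> 0 < c) ->
  a * ln c - a * ln a <= c - a.
Proof.
  intros Ha Hc Hac. destruct (Req_dec a 0) as [->|Ha0]; [lra|].
  assert (Hap : 0 < a) by lra. specialize (Hac Hap).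
  assert (H := exp_ineq1_le (ln c - ln a)).
  unfold Rminus in H. rewrite exp_plus, exp_Ropp, !exp_ln in H by lra.
  assert (a * (1 + (ln c + - ln a)) <= a * (c * / a)) by (apply Rmult_le_compat_l; lra).
  replace (a * (c * / a)) with c in H0 by (field; lra). nra.
Qed.

Lemma gibbs (a c : R) : 0 <= a <= 1 -> 0 <= c <= 1 ->
  (0 < a -> 0 < c) -> (a < 1 -> c < 1) ->
  a * ln c + (1 - a) * ln (1 - c) <= a * ln a + (1 - a) * ln (1 - a).
Proof.
  intros Ha Hc H1 H2.
  assert (T1 := gibbs_term a c ltac:(lra) ltac:(lra) H1).
  assert (T2 := gibbs_term (1-a) (1-c) ltac:(lra) ltac:(lra) ltac:(intros; assert (c<1) by (apply H2; lra); lra)).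
  lra.
Qed.

Lemma Hb_sym (a : R) : Hb (1 - a) = Hb a.
Proof. unfold Hb. replace (1 - (1 - a)) with a by ring. f_equal. f_equal. ring. Qed.

Lemma Hb_mix (a q : R) : 0 <= a <= 1 -> 0 <= q <= 1 ->
  Hb a <= Hb (a * (1 - q) + (1 - a) * q).
Proof.
  intros Ha Hq.
  destruct (Req_dec q 0) as [->|Hq0].
  { replace (a * (1 - 0) + (1 - a) * 0) with a by ring. lra. }
  destruct (Req_dec q 1) as [->|Hq1].
  { replace (a * (1 - 1) + (1 - a) * 1) with (1 - a) by ring. rewrite Hb_sym. lra. }
  set (c := a * (1 - q) + (1 - a) * q).
  assert (Hc : 0 <= c <= 1) by (unfold c; split; nra).
  assert (G1 := gibbs a c Ha Hc ltac:(intros; unfold c; nra) ltac:(intros; unfold c; nra)).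
  assert (G2 := gibbs (1 - a) c ltac:(lra) Hc ltac:(intros; unfold c; nra) ltac:(intros; unfold c; nra)).
  replace (1 - (1 - a)) with a in G2 by ring.
  assert (E : c * ln c + (1 - c) * ln (1 - c) =
     (1 - q) * (a * ln c + (1 - a) * ln (1 - c)) + q * ((1 - a) * ln c + a * ln (1 - c)))
    by (unfold c; ring).
  assert (c * ln c + (1 - c) * ln (1 - c) <= a * ln a + (1 - a) * ln (1 - a)).
  { rewrite E.
    assert ((1 - q) * (a * ln c + (1 - a) * ln (1 - c)) <= (1 - q) * (a * ln a + (1 - a) * ln (1 - a)))
      by (apply Rmult_le_compat_l; lra).
    assert (q * ((1 - a) * ln c + a * ln (1 - c)) <= q * (a * ln a + (1 - a) * ln (1 - a)))
      by (apply Rmult_le_compat_l; lra).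
    lra. }
  unfold Hb. unfold Rdiv. apply Rmult_le_compat_r.
  - left. apply Rinv_0_lt_compat. assert (H1 := ln_lt_2). lra.
  - fold c. lra.
Qed.

Lemma conv_mono (S T : R * R -> Prop) : (forall x, S x -> T x) ->
  forall r, conv_hull S r -> conv_hull T r.
Proof.
  intros HST r [l [Hf Hl]]. exists l. split; [|exact Hl].
  eapply Forall_impl; [|exact Hf]. simpl. intros wp [H1 H2]. split; auto.
Qed.

Theorem theorem4 (p13 p14 p23 p34 : R)
  (h13 : 0 <= p13 <= 1) (h14 : 0 <= p14 <= 1)
  (h23 : 0 <= p23 <= 1) (h34 : 0 <= p34 <= 1) :
  (forall r : R * R, Lambda_nc p13 p14 p23 p34 r -> Lambda_serial p13 p14 p23 p34 r) /\
  (forall r : R * R, Lambda_serial p13 p14 p23 p34 r -> Lambda_joint p13 p14 p23 p34 r).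
Proof.
  set (x := (1 - p13) * (1 - p23) + p13 * p23).
  assert (Hx : 0 <= x <= 1).
  { unfold x. assert (0 <= (1-p13)*(1-p23)) by nra. assert (0 <= p13*p23) by nra.
    assert (0 <= p13*(1-p23)) by nra. assert (0 <= (1-p13)*p23) by nra. nra. }
  assert (Ha : 0 <= p_prime p13 p23 p34 <= 1).
  { unfold p_prime. fold x. replace (p13 * (1 - p23) + (1 - p13) * p23) with (1 - x) by (unfold x; ring).
    split; nra. }
  assert (Hle : Cpp p13 p14 p23 p34 <= Cp p13 p23 p34).
  { unfold Cpp, Cp.
    replace (p_second p13 p23 p34 p14) with
      (p_prime p13 p23 p34 * (1 - p14) + (1 - p_prime p13 p23 p34) * p14)
      by (unfold p_second, p_prime; ring).
    assert (H := Hb_mix _ p14 Ha h14). lra. }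
  split; apply conv_mono; intros [a b]; unfold nc_set, serial_set, joint_set; simpl; intros; lra.
Qed.
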